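(* Let $Q$ be a connected quiver with two mutable vertices $1,2$ and one frozen vertex $u$, with $|b_{12}|\ge2$. Then for any infinite reduced mutation sequence $\mathbf M$, there are at most four values $\ell\ge0$ such that $Q^{(\ell)}_{\mathbf M}$ is acyclic.
   Context: A quiver is a finite directed multigraph with no loops and no oriented 2-cycles, whose vertex set is partitioned into mutable and frozen vertices. $b_{ik}$ = number of arrows $i\to k$ minus number of arrows $k\to i$. Mutation $\mu_j$ at mutable $j$: for each path $i\to j\to k$ add $b_{ij}b_{jk}$ arrows $i\to k$, reverse all arrows at $j$, cancel 2-cycles. A mutation sequence $\mathbf M=m_1m_2\cdots$ has $Q^{(0)}_{\mathbf M}=Q$, $Q^{(i)}_{\mathbf M}=\mu_{m_i}(Q^{(i-1)}_{\mathbf M})$; reduced means $m_i\ne m_{i+1}$ (so in rank 2 it alternates between $1$ and $2$). Connected: the mutable part is connected as an undirected graph and every frozen vertex is adjacent to some mutable vertex. Acyclic means the underlying directed graph has no directed cycle. *)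

(* Defs.v *)
From mathcomp Require Import all_boot all_order all_algebra.
Set Implicit Arguments. Unset Strict Implicit. Unset Printing Implicit Defensive.
Import Order.TTheory GRing.Theory Num.Theory.
Local Open Scope ring_scope.

(* A quiver on the vertex set 'I_n (no loops, no oriented 2-cycles) is
   encoded by its exchange matrix b : b i k = #(i -> k) - #(k -> i).
   Such matrices are exactly the skew-symmetric integer matrices. *)
Definition quiver_mx (n : nat) (B : 'M[int]_n) : Prop := forall i k, B k i = - B i k.

Definition pospart (x : int) : int := Num.max x 0.

(* Quiver mutation at j: for i,k <> j, add (#paths i->j->k) arrows i->k,
   which after cancelling 2-cycles changes b_ik by
   [b_ij]_+ [b_jk]_+ - [b_kj]_+ [b_ji]_+ ; arrows at j are reversed. *)
Definition mutate (n : nat) (j : 'I_n) (B : 'M[int]_n) : 'M[int]_n :=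
  \matrix_(i, k)
    if (i == j) || (k == j) then - B i k
    else B i k + pospart (B i j) * pospart (B j k)
               - pospart (B k j) * pospart (B j i).

(* Q^{(l)}_M : M l is the (l+1)-st mutation m_{l+1} *)
Fixpoint mut_seq (n : nat) (B : 'M[int]_n) (M : nat -> 'I_n) (l : nat) : 'M[int]_n :=
  match l with
  | 0 => B
  | l'.+1 => mutate (M l') (mut_seq B M l')
  end.

Definition arrow (n : nat) (B : 'M[int]_n) : rel 'I_n := fun i k => 0 < B i k.

Definition acyclic (n : nat) (B : 'M[int]_n) : bool :=
  [forall i, ~~ [exists k, arrow B i k && connect (arrow B) k i]].

(* Rank-2 quiver with one frozen vertex: vertices 'I_3; vertices 0,1 are the
   mutable vertices "1","2"; vertex 2 is the frozen vertex u. *)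
Definition v1 : 'I_3 := inord 0.
Definition v2 : 'I_3 := inord 1.
Definition vu : 'I_3 := inord 2.

Definition connected3 (B : 'M[int]_3) : Prop :=
  B v1 v2 != 0 /\ (B vu v1 != 0 \/ B vu v2 != 0).

Definition reduced_inf_seq (M : nat -> 'I_3) : Prop :=
  (forall l, M l \in [:: v1; v2]) /\ (forall l, M l != M l.+1).

(* Main.v *)
Require Import Defs.
From mathcomp Require Import all_boot all_order all_algebra zify ring.
Import Order.TTheory GRing.Theory Num.Theory.
Local Open Scope ring_scope.
Section Abs.
Variables (W : nat -> int) (m : int).
Hypothesis hm : 2 <= m.
Hypothesis hrec : forall n, (0 <= W n.+1 -> W n.+2 = m * W n.+1 - W n)
                          /\ (W n.+1 <= 0 -> W n.+2 = - W n).
Hypothesis hnz : W 0 != 0 \/ W 1 != 0.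

Definition P n := (0 < W n) && (0 < W n.+1).

Lemma fwd d p : P p -> W p <= W p.+1 -> P (p + d) /\ W (p + d) <= W (p + d).+1.
Proof.
elim: d p => [|d IH] p HP Hle; first by rewrite addn0.
have [HP' Hle'] := IH p HP Hle.
move: HP'; rewrite /P addnS => /andP[h1 h2].
have [r1 _] := hrec (p + d).
have e := r1 (ltW h2).
split; first (apply/andP; split => //); nia.
Qed.

Lemma bwd d p : P (p + d) -> W (p + d).+1 <= W (p + d) -> P p /\ W p.+1 <= W p.
Proof.
elim: d p => [|d IH] p HP Hle; first by rewrite addn0 in HP Hle.
rewrite -addSnnS in HP Hle.
have [HP' Hle'] := IH p.+1 HP Hle.
move: HP'; rewrite /P => /andP[h1 h2].
have [r1 _] := hrec p.
have e := r1 (ltW h1).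
split; first (apply/andP; split => //); nia.
Qed.

Lemma nz n : W n != 0 \/ W n.+1 != 0.
Proof.
elim: n => [//|n IH].
have [r1 r2] := hrec n.
case: (lerP 0 (W n.+1)) => h.
- have e := r1 h. lia.
- have e := r2 (ltW h). lia.
Qed.

Lemma window n : exists j, (j <= 4)%N /\ P (n + j).
Proof.
have H := nz n.
have [a1 a2] := hrec n.
have [b1 b2] := hrec n.+1.
have [c1 c2] := hrec n.+2.
have [d1 d2] := hrec n.+3.
have m1 : forall k, (0 < W k -> 2 * W k <= m * W k) /\ (W k = 0 -> m * W k = 0) by move=> k; split=> hk; [nia|by rewrite hk mulr0].
have e1 := m1 n.+1. have e2 := m1 n.+2. have e3 := m1 n.+3. have e4 := m1 n.+4.
move: a1 a2 b1 b2 c1 c2 d1 d2 e1 e2 e3 e4 H.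
set x0 := W n; set x1 := W n.+1; set x2 := W n.+2; set x3 := W n.+3; set x4 := W n.+4; set x5 := W n.+4.+1.
set t1 := m * x1; set t2 := m * x2; set t3 := m * x3; set t4 := m * x4.
move=> a1 a2 b1 b2 c1 c2 d1 d2 e1 e2 e3 e4 H.
rewrite /P.
have : (0 < x0) && (0 < x1) \/ (0 < x1) && (0 < x2) \/ (0 < x2) && (0 < x3)
   \/ (0 < x3) && (0 < x4) \/ (0 < x4) && (0 < x5).
  clearbody x0 x1 x2 x3 x4 x5 t1 t2 t3 t4.
  case: (lerP 0 x1) => h1; [move: (a1 h1) | move: (a2 (ltW h1))] => {a1 a2} f1;
  (case: (lerP 0 x2) => h2; [move: (b1 h2) | move: (b2 (ltW h2))] => {b1 b2} f2);
  (case: (lerP 0 x3) => h3; [move: (c1 h3) | move: (c2 (ltW h3))] => {c1 c2} f3);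
  (case: (lerP 0 x4) => h4; [move: (d1 h4) | move: (d2 (ltW h4))] => {d1 d2} f4);
  clear -hm e1 e2 e3 e4 H f1 f2 f3 f4 h1 h2 h3 h4; lia.
case=> [h|[h|[h|[h|h]]]].
- by exists 0%N; rewrite addn0.
- by exists 1%N; rewrite addn1.
- by exists 2%N; rewrite !addnS addn0.
- by exists 3%N; rewrite !addnS addn0.
- by exists 4%N; rewrite !addnS addn0.
Qed.

Lemma bound (s : seq nat) : uniq s -> (forall l, l \in s -> ~~ P l) -> (size s <= 4)%N.
Proof.
move=> us hs.
case: s us hs => [//|x0 s'] us hs.
have ex : exists n, n \in x0 :: s' by exists x0; rewrite inE eqxx.
case: (ex_minnP ex) => i iin imin.
have sub : {subset x0 :: s' <= iota i 4}.
  move=> l lin; rewrite mem_iota.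
  have il := imin l lin.
  rewrite il /=.
  rewrite ltnNge; apply/negP => hl.
  have [j [hj Pj]] := window i.
  have hPi := hs i iin.
  have hPl := hs l lin.
  have j0 : j != 0%N by apply: contraNneq hPi => e; rewrite e addn0 in Pj.
  have jl : (i + j != l) by apply: contraNneq hPl => <-.
  case: (lerP (W (i + j)) (W (i + j).+1)) => h.
    have [hP _] := fwd (l - (i + j)) (i + j) Pj h.
    rewrite subnKC in hP; first by rewrite hP in hPl.
    by apply: leq_trans hl; rewrite leq_add2l.
  have [hP _] := bwd j i Pj (ltW h).
  by rewrite hP in hPi.
have := uniq_leq_size us sub.
by rewrite size_iota.
Qed.
End Abs.
Lemma mutate_skew n j (B : 'M[int]_n) : quiver_mx B -> quiver_mx (mutate j B).
Proof.
move=> sk i k; rewrite !mxE orbC.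
case: ifP => _; first by rewrite sk opprK.
rewrite (sk k i) (sk j i) (sk k j) /pospart. ring.
Qed.

Lemma cyc_not_acyclic n (B : 'M[int]_n) i j k :
  arrow B i j -> arrow B j k -> arrow B k i -> ~~ acyclic B.
Proof.
move=> h1 h2 h3; rewrite /acyclic negb_forall; apply/existsP; exists i.
rewrite negbK; apply/existsP; exists j; rewrite h1 /=.
exact: connect_trans (connect1 h2) (connect1 h3).
Qed.

Lemma vne : (vu != v1) && (vu != v2) && (v1 != v2).
Proof. by rewrite /vu /v1 /v2 -!val_eqE /= !inordK. Qed.
Lemma posE1 (x : int) : 0 <= x -> pospart x = x.
Proof. rewrite /pospart; lia. Qed.
Lemma posE2 (x : int) : x <= 0 -> pospart x = 0.
Proof. rewrite /pospart; lia. Qed.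

Theorem mainTheorem18 (B : 'M[int]_3) (M : nat -> 'I_3) :
  quiver_mx B -> connected3 B -> 2 <= `|B v1 v2| ->
  reduced_inf_seq M ->
  forall s : seq nat, uniq s -> all (fun l => acyclic (mut_seq B M l)) s ->
  (size s <= 4)%N.
Proof.
move=> sk [_ conn] hb [Min Mne] s us hall.
have Mc : forall l, M l = v1 \/ M l = v2.
  by move=> l; move: (Min l); rewrite !inE => /orP[/eqP|/eqP]; [left|right].
move/andP: vne => [/andP [n1 n2] n3].
have M2 : forall l, M l.+2 = M l.
  move=> l; move: (Mne l) (Mne l.+1).
  by case: (Mc l) => ->; case: (Mc l.+1) => ->; case: (Mc l.+2) => ->;
    rewrite ?eqxx // ?(negbTE n3) ?(eq_sym v2) ?(negbTE n3).
have vuM : forall l, vu != M l by move=> l; case: (Mc l) => ->.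
set Bn := mut_seq B M.
have skn : forall l, quiver_mx (Bn l) by elim => [|l IH] //=; apply: mutate_skew.
have Bs : forall l, Bn l.+1 = mutate (M l) (Bn l) by [].
set beta := B (M 0) (M 1).
have hbeta : forall l, Bn l (M l) (M l.+1) = beta.
  elim=> [//|l IH]. rewrite Bs M2 mxE eqxx orbT /= -IH.
  by rewrite (skn l (M l) (M l.+1)) opprK.
have cstep : forall l, Bn l.+1 vu (M l.+2) = - Bn l vu (M l).
  by move=> l; rewrite Bs M2 mxE eqxx orbT.
have astep : forall l, Bn l.+1 vu (M l.+1) = Bn l vu (M l.+1)
     + pospart (Bn l vu (M l)) * pospart beta
     - pospart (- beta) * pospart (- Bn l vu (M l)).
  move=> l; rewrite Bs mxE (negbTE (vuM l)) eq_sym (negbTE (Mne l)) /=.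
  by rewrite (skn l (M l) (M l.+1)) (skn l vu (M l)) hbeta.
have hm : 2 <= `|beta|.
  rewrite /beta; move: (Mne 0%N); case: (Mc 0%N) => ->; case: (Mc 1%N) => ->;
    rewrite ?eqxx // => _.
  by rewrite sk normrN.
set s0 : int := if 0 < beta then 1 else -1.
pose W l := - s0 * Bn l vu (M l.+1).
have WS : forall l, W l.+1 = s0 * Bn l vu (M l).
  by move=> l; rewrite /W cstep mulrNN.
have hrec : forall n, (0 <= W n.+1 -> W n.+2 = `|beta| * W n.+1 - W n)
                          /\ (W n.+1 <= 0 -> W n.+2 = - W n).
  move=> n; rewrite !WS astep /W.
  move: (Bn n vu (M n)) (Bn n vu (M n.+1)) => a c.
  rewrite /s0; case: (ltrP 0 beta) => hbt.
    rewrite (posE1 _ (ltW hbt)) (posE2 (- beta)); last lia.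
    rewrite gtr0_norm //.
    split=> h.
      rewrite posE1; lia.
    rewrite posE2; lia.
  rewrite (posE1 (- beta)); last lia.
  rewrite (posE2 _ hbt) ler0_norm //.
  split=> h.
    rewrite (posE1 (- a)); last lia. lia.
  rewrite (posE2 (- a)); last lia. lia.
have hnz : W 0%N != 0 \/ W 1%N != 0.
  rewrite WS /W /=.
  have s0nz : s0 != 0 by rewrite /s0; case: ifP.
  move: (Mne 0%N); case: (Mc 0%N) => ->; case: (Mc 1%N) => ->; rewrite ?eqxx // => _;
  case: conn => h; [right|left|left|right]; rewrite ?mulNr ?oppr_eq0 mulf_neq0 //.
have hPa : forall l, P W l -> ~~ acyclic (Bn l).
  move=> l /andP[]; rewrite WS /W /s0.
  have e1 := skn l (M l) (M l.+1). have e2 := skn l vu (M l.+1).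
  have e3 := skn l vu (M l). have e4 := hbeta l.
  case: (ltrP 0 beta) => hbt h1 h2.
    apply: (@cyc_not_acyclic _ _ (M l) (M l.+1) vu); rewrite /arrow; lia.
  apply: (@cyc_not_acyclic _ _ (M l.+1) (M l) vu); rewrite /arrow.
  - have : beta != 0 by apply/eqP => e; rewrite e normr0 in hm.
    lia.
  - lia.
  - lia.
apply: (@bound W _ hm hrec hnz s us) => l ln.
apply/negP => Pl; have := allP hall l ln; by rewrite (negbTE (hPa l Pl)).
Qed.
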